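(* Let $\Gamma=(\mathcal{A},\mathcal{R})$ be a finite argumentation framework with $|\mathcal{A}|=k$ and indexing $\phi$, and let $\Pi_\Gamma$ be a CNF formula over $\mathrm{VARS}(\Gamma)$ whose satisfying assignments are exactly those assignments for which setting $\mathcal{L}ab(\phi(i))=\mathtt{in}/\mathtt{out}/\mathtt{undec}$ according as $I_i/O_i/U_i$ is true yields a well-defined complete labelling of $\Gamma$ with at least one argument labelled $\mathtt{in}$. Let $SS$ be any procedure which, given a CNF formula, returns some satisfying assignment if one exists and the symbol $\varepsilon$ otherwise (the choice among satisfying assignments being arbitrary). For an assignment $\nu$ let $\mathrm{INARGS}(\nu)=\{\phi(i): I_i \text{ true in }\nu\}$. Consider the following procedure PrefSat: Set $E_p:=\emptyset$ and $cnf:=\Pi_\Gamma$. Outer loop: set $cnfdf:=cnf$ and $prefcand:=$ undefined. Inner loop: let $\nu:=SS(cnfdf)$; if $\nu\ne\varepsilon$, set $prefcand:=\nu$, $S:=\mathrm{INARGS}(\nu)$, and replace $cnfdf$ by $cnfdf\wedge\bigwedge_{a\in S}I_{\phi^{-1}(a)}\wedge\big(\bigvee_{a\in\mathcal{A}\setminus S}I_{\phi^{-1}(a)}\big)$ (an empty disjunction being false); repeat the inner loop as long as $\nu\neq\varepsilon$ and $\mathrm{INARGS}(\nu)\neq\mathcal{A}$. After the inner loop, if $prefcand$ is defined, set $E_p:=E_p\cup\{\mathrm{INARGS}(prefcand)\}$ and replace $cnf$ by $cnf\wedge\bigvee_{a\in\mathcal{A}\setminus\mathrm{INARGS}(prefcand)}I_{\phi^{-1}(a)}$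 (an empty disjunction being false); repeat the outer loop as long as $prefcand$ is defined. Finally, if $E_p=\emptyset$ set $E_p:=\{\emptyset\}$, and return $E_p$. Then, for every choice of outputs of $SS$, PrefSat terminates and returns exactly the set of preferred extensions of $\Gamma$.
   Context: An argumentation framework is a pair $(\mathcal{A},\mathcal{R})$ with $\mathcal{A}$ a finite set and $\mathcal{R}\subseteq\mathcal{A}\times\mathcal{A}$; $b$ attacks $a$ iff $(b,a)\in\mathcal{R}$, and $a^-=\{b:(b,a)\in\mathcal{R}\}$. A set $S\subseteq\mathcal{A}$ is conflict-free if no $a,b\in S$ with $b$ attacking $a$; $a$ is acceptable w.r.t. $S$ if every attacker of $a$ is attacked by some element of $S$; $S$ is admissible if conflict-free and every element of $S$ is acceptable w.r.t. $S$; $S$ is a preferred extension if it is a maximal (w.r.t. set inclusion) admissible set. A total function $\mathcal{L}ab:\mathcal{A}\to\{\mathtt{in},\mathtt{out},\mathtt{undec}\}$ is a complete labelling iff for every $a$: $\mathcal{L}ab(a)=\mathtt{in}\Leftrightarrow\forall b\in a^-\ \mathcal{L}ab(b)=\mathtt{out}$; $\mathcal{L}ab(a)=\mathtt{out}\Leftrightarrow\exists b\in a^-\ \mathcal{L}ab(b)=\mathtt{in}$; $\mathcal{L}ab(a)=\mathtt{undec}\Leftrightarrow(\forall b\in a^-\ \mathcal{L}ab(b)\ne\mathtt{in}\wedge\exists c\in a^-\ \mathcal{L}ab(c)=\mathtt{undec})$. An indexing is a bijection $\phi:\{1,\dots,k\}\to\mathcal{A}$, and $\mathrm{VARS}(\Gamma)=\bigcup_{i=1}^k\{I_i,O_i,U_i\}$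 are boolean variables. *)

(* Defs.v *)
From HB Require Import structures.
From mathcomp Require Import all_boot.
Set Implicit Arguments. Unset Strict Implicit. Unset Printing Implicit Defensive.

(* ---------- Argumentation frameworks: (A, R) with A : finType, R b a <-> b attacks a ---------- *)
Section AF.
Variables (A : finType) (R : rel A).

Definition conflict_free (S : {set A}) : bool :=
  [forall a in S, forall b in S, ~~ R b a].

Definition acceptable (a : A) (S : {set A}) : bool :=
  [forall b, R b a ==> [exists c in S, R c b]].

Definition admissible (S : {set A}) : bool :=
  conflict_free S && [forall a in S, acceptable a S].

Definition preferred (S : {set A}) : bool :=
  admissible S && [forall T : {set A}, (admissible T && (S \subset T)) ==> (T == S)].

Inductive lab := In | Out | Undec.

Definition complete_labelling (L : A -> lab) : Prop :=
  forall a,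
    (L a = In <-> (forall b, R b a -> L b = Out)) /\
    (L a = Out <-> (exists b, R b a /\ L b = In)) /\
    (L a = Undec <-> ((forall b, R b a -> L b <> In) /\ exists c, R c a /\ L c = Undec)).
End AF.

Inductive vkind := VI | VO | VU.
Definition var (k : nat) := ('I_k * vkind)%type.
Definition literal (k : nat) := (bool * var k)%type.   (* (polarity, variable) *)
Definition clause (k : nat) := seq (literal k).       (* disjunction; [::] = false *)
Definition cnf (k : nat) := seq (clause k).           (* conjunction *)
Definition assignment (k : nat) := var k -> bool.

Definition sat (k : nat) (nu : assignment k) (f : cnf k) : bool :=
  all (fun c => has (fun l : literal k => nu l.2 == l.1) c) f.

Section Encoding.
Variables (A : finType) (R : rel A) (k : nat) (phi : 'I_k -> A).

Definition encodes_nonempty_complete (nu : assignment k) : Prop :=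
  exists L : A -> lab,
    (forall i, (nu (i, VI) <-> L (phi i) = In) /\
               (nu (i, VO) <-> L (phi i) = Out) /\
               (nu (i, VU) <-> L (phi i) = Undec)) /\
    complete_labelling R L /\ exists a, L a = In.

Definition INARGS (nu : assignment k) : {set A} :=
  [set phi i | i : 'I_k & nu (i, VI)].

Definition in_units (S : {set A}) : cnf k :=
  [seq [:: (true, (i, VI))] | i <- enum 'I_k & phi i \in S].

Definition out_disj (S : {set A}) : clause k :=
  [seq (true, (i, VI)) | i <- enum 'I_k & phi i \notin S].

(* SS is modelled as an arbitrary oracle: the answer to the n-th call on formula f
   is SS n f (None = epsilon). *)
Definition valid_solver (SS : nat -> cnf k -> option (assignment k)) : Prop :=
  forall n f, match SS n f return Prop with
              | Some nu => sat nu f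
              | None => forall nu, ~~ sat nu f
              end.

Variable SS : nat -> cnf k -> option (assignment k).

(* inner loop: returns the final prefcand and the updated call counter;
   None = out of fuel *)
Fixpoint inner (fuel : nat) (n : nat) (cnfdf : cnf k) (prefcand : option (assignment k))
  : option (option (assignment k) * nat) :=
  match fuel with
  | 0 => None
  | fuel'.+1 =>
    match SS n cnfdf with
    | None => Some (prefcand, n.+1)
    | Some nu =>
      let S := INARGS nu in
      let cnfdf' := cnfdf ++ in_units S ++ [:: out_disj S] in
      if S == setT then Some (Some nu, n.+1)
      else inner fuel' n.+1 cnfdf' (Some nu)
    end
  end.

Fixpoint outer (fuel : nat) (n : nat) (cnf0 : cnf k) (Ep : {set {set A}})
  : option {set {set A}} :=
  match fuel with
  | 0 => None
  | fuel'.+1 =>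
    match inner fuel n cnf0 None with
    | None => None
    | Some (None, _) => Some Ep
    | Some (Some p, n') =>
        outer fuel' n' (cnf0 ++ [:: out_disj (INARGS p)]) (Ep :|: [set INARGS p])
    end
  end.

(* PrefSat run with a fuel bound; None = did not terminate within the bound *)
Definition PrefSat (Pi : cnf k) (fuel : nat) : option {set {set A}} :=
  match outer fuel 0 Pi set0 with
  | None => None
  | Some Ep => Some (if Ep == set0 then [set set0] else Ep)
  end.
End Encoding.

(* Main.v *)
Require Import Defs.
From HB Require Import structures.
From mathcomp Require Import all_boot.
Set Implicit Arguments. Unset Strict Implicit. Unset Printing Implicit Defensive.

Definition lab_eqb (x y : lab) : bool :=
  match x, y with In, In | Out, Out | Undec, Undec => true | _, _ => false end.
Lemma lab_eqP : Equality.axiom lab_eqb.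
Proof. by case; case; constructor. Qed.
HB.instance Definition _ := hasDecEq.Build lab lab_eqP.

Section AFfacts.
Variables (A : finType) (R : rel A).

Definition isIn (l : lab) : bool := if l is In then true else false.
Lemma isInP l : reflect (l = In) (isIn l).
Proof. by case: l; constructor. Qed.

Definition Cext (T : {set A}) : Prop :=
  exists L : A -> lab, complete_labelling R L /\ T = [set a | isIn (L a)] /\ T != set0.

Lemma cfP (S : {set A}) : reflect (forall a b, a \in S -> b \in S -> ~~ R b a) (conflict_free R S).
Proof.
apply: (iffP forallP) => [H a b Ha Hb|H a].
  by move: (H a); rewrite Ha /= => /forallP/(_ b); rewrite Hb.
by apply/implyP => Ha; apply/forallP => b; apply/implyP => Hb; apply: H.
Qed.

Lemma accP (a : A) (S : {set A}) :
  reflect (forall b, R b a -> exists2 c, c \in S & R c b) (acceptable R a S).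
Proof.
apply: (iffP forallP) => [H b Hb|H b].
  by move: (H b); rewrite Hb /= => /existsP [c /andP [Hc Hcb]]; exists c.
apply/implyP => Hb; have [c Hc Hcb] := H b Hb; apply/existsP; exists c; by rewrite Hc.
Qed.

Lemma admP (S : {set A}) : reflect
  ((forall a b, a \in S -> b \in S -> ~~ R b a) /\
   (forall a, a \in S -> forall b, R b a -> exists2 c, c \in S & R c b))
  (admissible R S).
Proof.
apply: (iffP andP) => [[/cfP H1 /forallP H2]|[H1 H2]]; split => //.
  by move=> a Ha; move: (H2 a); rewrite Ha => /accP.
  by apply/cfP.
by apply/forallP => a; apply/implyP => Ha; apply/accP; apply: H2.
Qed.

Lemma acc_mono a (S T : {set A}) : S \subset T -> acceptable R a S -> acceptable R a T.
Proof.
move=> ST /accP H; apply/accP => b Hb; have [c Hc Hcb] := H b Hb.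
by exists c => //; apply: (subsetP ST).
Qed.

Lemma fundamental (P : {set A}) a : admissible R P -> acceptable R a P ->
  admissible R (a |: P).
Proof.
move=> /admP [CF AC] /accP Ha; apply/admP; split.
- move=> x y; rewrite !in_setU1 => /orP [/eqP -> | Hx] /orP [/eqP -> | Hy].
  + apply/negP => Haa; have [c Hc Hca] := Ha a Haa.
    have [d Hd Hdc] := Ha c Hca. by move: (CF c d Hc Hd); rewrite Hdc.
  + apply/negP => Hya; have [c Hc Hcy] := Ha y Hya.
    by move: (CF y c Hy Hc); rewrite Hcy.
  + apply/negP => Hax; have [c Hc Hca] := AC x Hx a Hax.
    have [d Hd Hdc] := Ha c Hca. by move: (CF c d Hc Hd); rewrite Hdc.
  + exact: CF.
- move=> x; rewrite in_setU1 => /orP [/eqP -> | Hx] b Hb.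
  + have [c Hc Hcb] := Ha b Hb; by exists c => //; rewrite in_setU1 Hc orbT.
  + have [c Hc Hcb] := AC x Hx b Hb; by exists c => //; rewrite in_setU1 Hc orbT.
Qed.

Lemma pref_adm (S : {set A}) : preferred R S -> admissible R S.
Proof. by case/andP. Qed.

Lemma pref_max (S T : {set A}) : preferred R S -> admissible R T -> S \subset T -> T = S.
Proof.
case/andP => _ /forallP H AT ST; move: (H T); rewrite AT ST /=; by move/eqP.
Qed.

Lemma exists_pref (T : {set A}) : admissible R T -> exists2 P, preferred R P & T \subset P.
Proof.
move=> AT.
have P0 : (fun X : {set A} => admissible R X && (T \subset X)) T by rewrite AT subxx.
case: (@arg_maxnP _ T (fun X : {set A} => admissible R X && (T \subset X)) (fun X : {set A} => #|X|) P0) => P /andP [AP TP] Hmax.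
exists P => //; apply/andP; split => //; apply/forallP => Q; apply/implyP.
case/andP => AQ PQ; have := Hmax Q; rewrite AQ (subset_trans TP PQ) => /(_ isT) HQ.
by rewrite eq_sym eqEcard PQ; apply: HQ.
Qed.

Lemma Cext_adm (T : {set A}) : Cext T -> admissible R T.
Proof.
case=> L [HL [-> _]]; apply/admP; split.
- move=> a b; rewrite !inE => /isInP Ha /isInP Hb; apply/negP => Hba.
  have [H1 _] := HL a; have := (proj1 H1 Ha b Hba); by rewrite Hb.
- move=> a; rewrite inE => /isInP Ha b Hba.
  have [H1 [H2 _]] := HL a; have Hb := proj1 H1 Ha b Hba.
  have [H1' [H2' _]] := HL b; have [c [Hcb Hc]] := proj1 H2' Hb.
  by exists c; rewrite ?inE ?Hc.
Qed.

Lemma undec_derive (L : A -> lab) a :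
  (L a = In <-> (forall b, R b a -> L b = Out)) ->
  (L a = Out <-> (exists b, R b a /\ L b = In)) ->
  (forall b, R b a -> L b = Out -> exists c, R c b /\ L c = In) ->
  (L a = Undec <-> ((forall b, R b a -> L b <> In) /\ exists c, R c a /\ L c = Undec)).
Proof.
move=> H1 H2 _; split.
- move=> Hu; split.
    by move=> b Hb Hbin; have := proj2 H2 (ex_intro _ b (conj Hb Hbin)); rewrite Hu.
  case: (boolP [exists b, R b a && (L b != Out)]).
    case/existsP => b /andP [Hb Hnb]; exists b; split => //.
    case E: (L b) => //; last by rewrite E in Hnb.
    by have := proj2 H2 (ex_intro _ b (conj Hb E)); rewrite Hu.
  move=> /existsPn Hn; have : L a = In.
    by apply: (proj2 H1) => b Hb; move: (Hn b); rewrite Hb /= negbK => /eqP.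
  by rewrite Hu.
- move=> [Hno [c [Hc Hcu]]]; case E: (L a) => //.
    by have := proj1 H1 E c Hc; rewrite Hcu.
  by have [b [Hb Hbin]] := proj1 H2 E; have := Hno b Hb Hbin.
Qed.

Lemma pref_Cext (P : {set A}) : preferred R P -> P != set0 -> Cext P.
Proof.
move=> HP Pn0; have AP := pref_adm HP; have /admP [CF AC] := AP.
pose L := fun a => if a \in P then In else if [exists b in P, R b a] then Out else Undec.
have LIn a : (L a = In) <-> a \in P.
  by rewrite /L; case: (a \in P); split => //; case: ifP.
have LOut a : (L a = Out) <-> (a \notin P /\ exists2 b, b \in P & R b a).
  rewrite /L; case Ha: (a \in P); first by split => // [[]].
  case: ifP => [/existsP [b /andP [Hb Hba]]|/existsP Hn]; split => //.
  - by move=> _; split => //; exists b.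
  - by case=> _ [b Hb Hba]; case: Hn; exists b; rewrite Hb.
have H1 a : L a = In <-> (forall b, R b a -> L b = Out).
  split.
  - move=> /LIn Ha b Hba; apply/LOut; split.
      by apply/negP => Hb; move: (CF a b Ha Hb); rewrite Hba.
    have [c Hc Hcb] := AC a Ha b Hba; by exists c.
  - move=> H; apply/LIn; case: (boolP (a \in P)) => // Hna.
    have Hacc : acceptable R a P.
      apply/accP => b Hb; have [_ [c Hc Hcb]] := proj1 (LOut b) (H b Hb); by exists c.
    have := pref_max HP (fundamental AP Hacc) (subsetUr _ _).
    move=> E; by rewrite -E in_setU1 eqxx in Hna.
have H2 a : L a = Out <-> (exists b, R b a /\ L b = In).
  split.
  - by move=> /LOut [_ [b Hb Hba]]; exists b; split => //; apply/LIn.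
  - move=> [b [Hba /LIn Hb]]; apply/LOut; split; last by exists b.
    by apply/negP => Ha; move: (CF a b Ha Hb); rewrite Hba.
exists L; split.
  move=> a; split; first exact: H1; split; first exact: H2.
  apply: undec_derive; [exact: H1 | exact: H2 | move=> b _; exact: (proj1 (H2 b))].
split => //; apply/setP => a; rewrite inE; apply/idP/isInP; by move/LIn.
Qed.

Lemma Cext_pref (S : {set A}) : Cext S -> (forall T, Cext T -> S \subset T -> T = S) -> preferred R S.
Proof.
move=> CS Hmax; have AS := Cext_adm CS.
apply/andP; split => //; apply/forallP => T; apply/implyP => /andP [AT ST].
have [P HP TP] := exists_pref AT.
have SP : S \subset P := subset_trans ST TP.
have Pn0 : P != set0.
  case: CS => L [_ [_ Sn0]]; apply/negP => /eqP P0; move: SP; rewrite P0 subset0.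
  by rewrite (negbTE Sn0).
have EP := Hmax P (pref_Cext HP Pn0) SP.
by rewrite eqEsubset ST andbT -EP.
Qed.

End AFfacts.

Section Algo.
Variables (A : finType) (R : rel A) (k : nat) (phi : 'I_k -> A).
Hypothesis phi_bij : bijective phi.
Variable Pi : cnf k.
Hypothesis HPi : forall nu : assignment k, sat nu Pi <-> encodes_nonempty_complete R phi nu.
Variable SS : nat -> cnf k -> option (assignment k).
Hypothesis HSS : valid_solver SS.

Lemma phi_inj : injective phi. Proof. exact: bij_inj. Qed.

Lemma phi_surj a : exists i, a = phi i.
Proof. case: phi_bij => g H1 H2; exists (g a); by rewrite H2. Qed.

Lemma mem_INARGS (nu : assignment k) i : (phi i \in INARGS phi nu) = nu (i, VI).
Proof. by rewrite /INARGS (mem_imset _ _ phi_inj) inE. Qed.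

Lemma sat_cat (nu : assignment k) f g : sat nu (f ++ g) = sat nu f && sat nu g.
Proof. by rewrite /sat all_cat. Qed.

Lemma sat_units (nu : assignment k) S : sat nu (in_units phi S) = (S \subset INARGS phi nu).
Proof.
rewrite /sat /in_units all_map all_filter.
apply/allP/subsetP => [H a Ha | H i _].
  have [i Ei] := phi_surj a; subst a.
  by have := H i (mem_enum _ i); rewrite /= Ha /= orbF mem_INARGS => /eqP.
apply/implyP => Hi /=; rewrite orbF; have := H _ Hi; by rewrite mem_INARGS => ->.
Qed.

Lemma sat_disj (nu : assignment k) S : sat nu [:: out_disj phi S] = ~~ (INARGS phi nu \subset S).
Proof.
rewrite /sat /= andbT /out_disj has_map.
apply/hasP/subsetPn => [[i] | [a Ha HaS]].
  rewrite mem_filter /= => /andP [HiS _] /eqP Hnu.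
  by exists (phi i) => //; rewrite mem_INARGS Hnu.
have [i Ei] := phi_surj a; subst a; exists i; first by rewrite mem_filter HaS mem_enum.
by rewrite /= -mem_INARGS Ha.
Qed.

Lemma sat_Pi_Cext (nu : assignment k) : sat nu Pi -> Cext R (INARGS phi nu).
Proof.
move=> /HPi [L [HL [CL [a Ha]]]]; exists L; split => //.
have E : INARGS phi nu = [set a | isIn (L a)].
  apply/setP => b; have [i Ei] := phi_surj b; subst b.
  rewrite mem_INARGS inE; have [H1 _] := HL i.
  by apply/idP/isInP => [/H1 | /H1].
split => //; rewrite E; apply/set0Pn; exists a; by rewrite inE Ha.
Qed.

Lemma Cext_sat T : Cext R T -> exists nu : assignment k, sat nu Pi /\ INARGS phi nu = T.
Proof.
case=> L [CL [ET Tn0]].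
pose nu := fun v : var k => match v.2 with VI => L (phi v.1) == In
                                          | VO => L (phi v.1) == Out
                                          | VU => L (phi v.1) == Undec end.
exists nu; split.
  apply/HPi; exists L; split.
    by move=> i; rewrite /nu /=; split; [|split]; split => /eqP.
  split => //; case/set0Pn: Tn0 => a; rewrite ET inE => /isInP Ha; by exists a.
apply/setP => b; have [i Ei] := phi_surj b; subst b.
by rewrite mem_INARGS ET inE /nu /=; case: (L (phi i)).
Qed.


Definition rep (f : cnf k) (Q : pred {set A}) :=
  forall nu : assignment k, sat nu f = sat nu Pi && Q (INARGS phi nu).

Lemma inner_ok (Q0 : pred {set A})
  (Q0mono : forall T T' : {set A}, T \subset T' -> Q0 T -> Q0 T') fuel :
  forall n cnfdf (pc : option (assignment k)),
  (match pc with None => rep cnfdf Q0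
   | Some p => Cext R (INARGS phi p) /\ Q0 (INARGS phi p) /\
       rep cnfdf (fun T => [&& Q0 T, INARGS phi p \subset T & ~~ (T \subset INARGS phi p)]) end) ->
  #|A| < fuel + (if pc is Some p then #|INARGS phi p| else 0) ->
  exists n', exists res, inner phi SS fuel n cnfdf pc = Some (res, n') /\
   match res with None => pc = None /\ (forall T, Cext R T -> ~~ Q0 T)
   | Some p => Cext R (INARGS phi p) /\ Q0 (INARGS phi p) /\
        forall T, Cext R T -> INARGS phi p \subset T -> T = INARGS phi p end.
Proof.
elim: fuel => [|fuel IH] n cnfdf pc Hrep Hfuel.
  case: pc Hrep Hfuel => [p|] _ /=; last by [].
  by rewrite add0n ltnNge max_card.
rewrite /=; have := HSS n cnfdf; case: (SS n cnfdf) => [nu Hsat|Hn].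
- have Hs := Hsat.
  have [HsPi HQd] : sat nu Pi /\
     (match pc with None => Q0 (INARGS phi nu)
      | Some p => [&& Q0 (INARGS phi nu), INARGS phi p \subset INARGS phi nu
                    & ~~ (INARGS phi nu \subset INARGS phi p)] end).
    case: pc Hrep {Hfuel} => [p [_ [_ Hr]]|Hr]; by move: Hs; rewrite Hr => /andP.
  have CS := sat_Pi_Cext HsPi.
  have Q0S : Q0 (INARGS phi nu) by case: pc Hrep Hfuel HQd => [p _ _ /and3P []|].
  case: ifP => [/eqP Efull|Hnfull].
    exists n.+1, (Some nu); split => //; split => //; split => // T _ HT.
    by apply/eqP; rewrite eqEsubset HT Efull subsetT.
  set S := INARGS phi nu.
  set cnf' := cnfdf ++ in_units phi S ++ [:: out_disj phi S].
  have Hrep' : rep cnf' (fun T => [&& Q0 T, S \subset T & ~~ (T \subset S)]).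
    move=> nu'; rewrite /cnf' !sat_cat sat_units sat_disj.
    set I' := INARGS phi nu'.
    case: pc Hrep HQd Hfuel => [p [_ [_ Hr]] | Hr] HQd _; rewrite Hr -/I'.
      move/and3P: HQd => [_ SpS _].
      case SI: (S \subset I'); last by rewrite /= !(andbF, andFb).
      rewrite (subset_trans SpS SI).
      case IS: (I' \subset S); first by rewrite /= !(andbF, andFb).
      have -> : (I' \subset INARGS phi p) = false.
        by apply/negP => H; move: IS; rewrite (subset_trans H SpS).
      by rewrite /= !andbT.
    by case: (sat nu' Pi); case: (Q0 I'); case: (S \subset I'); case: (I' \subset S).
  have Hfuel' : #|A| < fuel + #|S|.
    case: pc Hrep HQd Hfuel => [p _ | _] HQd Hf.
      move/and3P: HQd => [_ SpS NSS].
      have : #|INARGS phi p| < #|S| by apply: proper_card; rewrite properE SpS NSS.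
      move: Hf; rewrite addSn addnC => Hf Hc; rewrite addnC.
      apply: (leq_trans Hf); by rewrite ltn_add2r.
    case: CS => L [_ [_ Sn0]]; rewrite -card_gt0 in Sn0.
    move: Hf; rewrite addn0 => Hf; apply: (leq_trans Hf).
    by rewrite -addn1 leq_add2l.
  have [n' [res [Eq Hres]]] := IH n.+1 cnf' (Some nu) (conj CS (conj Q0S Hrep')) Hfuel'.
  exists n', res; split => //; case: res Eq Hres => [p|] _ H; [exact: H | by case: H].
- exists n.+1, pc; split => //.
  case: pc Hrep {Hfuel} => [p [Cp [Qp Hr]]|Hr].
  + split => //; split => // T CT ST.
    apply/eqP; rewrite eqEsubset ST andbT; apply/negPn/negP => HnT.
    have [nu [HnuPi EI]] := Cext_sat CT.
    have := Hn nu; rewrite Hr HnuPi EI ST HnT (Q0mono _ _ ST Qp).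
    by [].
  + split => // T CT; apply/negP => QT.
    have [nu [HnuPi EI]] := Cext_sat CT.
    by have := Hn nu; rewrite Hr HnuPi EI QT.
Qed.

Definition PrefP : {set {set A}} := [set S | preferred R S && (S != set0)].

Definition Qof (Ep : {set {set A}}) : pred {set A} :=
  fun T => [forall E in Ep, ~~ (T \subset E)].

Lemma Qof_mono Ep (T T' : {set A}) : T \subset T' -> Qof Ep T -> Qof Ep T'.
Proof.
move=> TT' /forallP H; apply/forallP => E; apply/implyP => HE.
move: (H E); rewrite HE /= => HT; apply/negP => H'; move: HT.
by rewrite (subset_trans TT' H').
Qed.

Lemma Qof_add Ep (S T : {set A}) : Qof (Ep :|: [set S]) T = Qof Ep T && ~~ (T \subset S).
Proof.
apply/forallP/andP => [H|[/forallP H1 H2] E].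
  split; last by move: (H S); rewrite !inE eqxx orbT.
  by apply/forallP => E; apply/implyP => HE; move: (H E); rewrite inE HE.
rewrite !inE; case: (boolP (E \in Ep)) => HE /=; first by move: (H1 E); rewrite HE.
by apply/implyP => /eqP ->.
Qed.

Lemma outer_ok fuel : forall n cnf0 (Ep : {set {set A}}),
  rep cnf0 (Qof Ep) ->
  (forall E, E \in Ep -> E \in PrefP) ->
  #|A| + #|PrefP :\: Ep| < fuel ->
  outer phi SS fuel n cnf0 Ep = Some PrefP.
Proof.
elim: fuel => [|fuel IH] n cnf0 Ep Hrep HEp Hfuel; first by [].
cbn [outer].
have Hf0 : #|A| < fuel.+1 + 0 by rewrite addn0; exact: leq_ltn_trans (leq_addr _ _) Hfuel.
have [n' [res [Eq Hres]]] := @inner_ok (Qof Ep) (@Qof_mono Ep) fuel.+1 n cnf0 None Hrep Hf0.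
rewrite Eq; case: res Eq Hres => [p|] _ Hres.
- case: Hres => CS [QS Hmax].
  set S := INARGS phi p in CS QS Hmax *.
  have PS : preferred R S := Cext_pref CS Hmax.
  have Sn0 : S != set0 by case: CS => L [_ [_ ?]].
  have SnE : S \notin Ep.
    by apply/negP => H; move/forallP: QS => /(_ S); rewrite H subxx.
  apply: IH.
  + move=> nu; rewrite sat_cat sat_disj Hrep Qof_add; by rewrite andbA.
  + move=> E; rewrite inE => /orP [/HEp //| /set1P ->]; by rewrite inE PS.
  + rewrite -ltnS; apply: leq_trans Hfuel; rewrite ltnS ltn_add2l.
    apply: proper_card; apply/properP; split.
      by apply: setDS; apply: subsetUl.
    exists S; first by rewrite inE SnE inE PS.
    by rewrite inE inE set11 orbT.
- case: Hres => _ HnoQ; congr Some; apply/setP => E; apply/idP/idP; first exact: HEp.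
  move=> HE; move: (HE); rewrite inE => /andP [PE En0].
  have := HnoQ E (pref_Cext PE En0); rewrite /Qof negb_forall => /existsP [E'].
  rewrite negb_imply negbK => /andP [HE' EE'].
  have := HEp E' HE'; rewrite inE => /andP [PE' _].
  by rewrite -(pref_max PE (pref_adm PE') EE').
Qed.

Lemma adm0 : admissible R set0.
Proof. by apply/admP; split => [a b|a]; rewrite inE. Qed.

Lemma final fuel : #|A| + #|PrefP| < fuel ->
  PrefSat phi SS Pi fuel = Some [set S : {set A} | preferred R S].
Proof.
move=> Hf; rewrite /PrefSat outer_ok //; first last.
- by rewrite setD0.
- by move=> E; rewrite inE.
- move=> nu; rewrite /Qof.
  have -> : [forall E in (set0 : {set {set A}}), ~~ (INARGS phi nu \subset E)].
    by apply/forallP => E; rewrite inE.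
  by rewrite andbT.
congr Some.
have [P0 HP0 _] := exists_pref adm0.
case: ifP => [/eqP E0 | /negbT /set0Pn [P HP]].
- have Hall S : preferred R S -> S = set0.
    move=> PS; apply/eqP; apply/negPn/negP => Sn0.
    have : S \in PrefP by rewrite inE PS Sn0.
    by rewrite E0 inE.
  apply/setP => S; rewrite !inE; apply/eqP/idP => [->|/Hall //].
  by rewrite -(Hall P0 HP0).
- apply/setP => S; rewrite !inE; apply/andP/idP => [[] //|PS]; split => //.
  apply/negP => /eqP S0; move: HP; rewrite inE => /andP [PP Pn0].
  have := pref_max PS (pref_adm PP); rewrite S0 sub0set => /(_ isT) E.
  by rewrite E eqxx in Pn0.
Qed.

End Algo.

Theorem theorem1 (A : finType) (R : rel A) (k : nat) (phi : 'I_k -> A)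
    (phi_bij : bijective phi) (Pi : cnf k)
    (HPi : forall nu : assignment k, sat nu Pi <-> encodes_nonempty_complete R phi nu)
    (SS : nat -> cnf k -> option (assignment k)) (HSS : valid_solver SS) :
  exists N : nat, forall fuel : nat, N <= fuel ->
    PrefSat phi SS Pi fuel = Some [set S : {set A} | preferred R S].
Proof.
exists (#|A| + #|PrefP R|).+1 => fuel Hf.
exact: (final phi_bij HPi HSS Hf).
Qed.
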